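(* Let $n\ge3$ and $\omega\ge\lfloor 3n/4\rfloor$ be integers. Then the sequences in the set $\{\mathbf{s}_n\in\mathcal{R}(n,\lceil n/2\rceil): add(\mathbf{s}_n)=\omega-\lceil n/2\rceil\}$ are pairwise shift inequivalent, i.e. no two distinct elements of this set are circular shifts of one another.
   Context: All sequences are binary (entries in $\mathbb{Z}_2$), $\overline{x}=x\oplus1$, $x\bmod d$ is the least nonnegative residue, and $\mathbf{a}^q$ is the concatenation of $q$ copies of $\mathbf a$. For $\mathbf{s}_n=(s_0,\dots,s_{n-1})$, $\mathbf{s}_j=(s_0,\dots,s_{j-1})$. A length-$m$ sequence is periodic if it is the concatenation of $m/e$ copies of a length-$e$ sequence for a proper divisor $e$ of $m$, aperiodic otherwise. Right circular shift: $R^k(\mathbf{s}_n)=(s_{n-k},\dots,s_{n-1},s_0,\dots,s_{n-k-1})$, $0\le k<n$. For $c\ge\lfloor n/2\rfloor$ and $1\le d\le\min\{n-c,\lfloor n/2\rfloor\}$, $\mathcal{B}(n,c,d)$ is the set of aperiodic length-$n$ sequences $\mathbf{s}_n$ with $\mathbf{s}_d$ aperiodic and $\mathbf{s}_{c+d}=(s_0,\dots,s_{d-1})^q(s_0,\dots,s_{r-1},\overline{s_r})$, where $q=\lfloor(c+d-1)/d\rfloor$, $r=c+d-1-qd$, and $s_{c+d},\dots,s_{n-1}$ are arbitrary. $\mathcal{B}(n,c)=\bigcup_{d=1}^{\min\{n-c,\lfloor n/2\rfloor\}}\mathcal{B}(n,c,d)$. For $\mathbf{s}_n\in\mathcal{B}(n,c,d)$,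 $add(\mathbf{s}_n)$ is the integer $t\ge0$ such that $s_{n-1-i}=s_{(d-1-i)\bmod d}$ for $0\le i<t$ and $s_{n-1-t}\neq s_{(d-1-t)\bmod d}$. For $\mathbf{s}_n\in\mathcal{B}(n,c)$, $E(\mathbf{s}_n)=\{R^k(\mathbf{s}_n):0\le k<n\}\cap\mathcal{B}(n,c)$, and $\mathcal{R}(n,c)$ is the set of all $\mathbf{s}\in\mathcal{B}(n,c)$ with $add(\mathbf{s})\ge add(\mathbf a)$ for every $\mathbf a\in E(\mathbf s)$. *)

(* Defs.v *)
From mathcomp Require Import all_boot.
Set Implicit Arguments. Unset Strict Implicit. Unset Printing Implicit Defensive.

Definition periodic (s : seq bool) : Prop :=
  exists e, [/\ 0 < e, e < size s, e %| size s &
                s = flatten (nseq (size s %/ e) (take e s))].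

Definition aperiodic (s : seq bool) : Prop := ~ periodic s.

Definition Rshift (k : nat) (s : seq bool) : seq bool := rotr k s.

(* The set B(n,c,d), including the standing constraints on c and d. *)
Definition inB3 (n c d : nat) (s : seq bool) : Prop :=
  let q := (c + d - 1) %/ d in
  let r := c + d - 1 - q * d in
  [/\ n./2 <= c, 1 <= d & d <= minn (n - c) n./2] /\
  [/\ size s = n, aperiodic s, aperiodic (take d s) &
      take (c + d) s =
        flatten (nseq q (take d s)) ++ rcons (take r s) (~~ nth false s r)].

Definition inB2 (n c : nat) (s : seq bool) : Prop := exists d, inB3 n c d s.

(* add(s) for s in B(n,c,d): the least t >= 0 with
   s_{n-1-t} <> s_{(d-1-t) mod d}; note (d-1-t) mod d = d-1-(t mod d).
   (For s in B(n,c,d) such a t < n always exists, so [find] returns it.) *)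
Definition add (n d : nat) (s : seq bool) : nat :=
  find (fun t => nth false s (n - 1 - t) != nth false s (d.-1 - t %% d))
       (iota 0 n).

Definition inR (n c : nat) (s : seq bool) : Prop :=
  exists d, inB3 n c d s /\
    forall k d', k < n -> inB3 n c d' (Rshift k s) ->
      add n d' (Rshift k s) <= add n d s.

Definition inRadd (n c w : nat) (s : seq bool) : Prop :=
  inR n c s /\ exists d, inB3 n c d s /\ add n d s = w.

(* Main.v *)
From Stdlib Require Import ZArith Lia.
Require Import Defs.
From mathcomp Require Import all_boot.

Module ZPart.
Local Open Scope Z_scope.


Section FWsec.
Variable F : Z -> bool.

Definition per (x y p : Z) : Prop :=
  forall i, x <= i -> i + p < y -> F i = F (i + p).

Lemma per_mult x y g : 0 < g -> per x y g ->
  forall k, 0 <= k -> forall i, x <= i -> i + k * g < y -> F i = F (i + k * g).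
Proof.
move=> g0 Hp k k0; pattern k; apply: natlike_ind => //.
- by move=> i _ _; rewrite Z.mul_0_l Z.add_0_r.
- move=> k' k'0 IH i xi lt.
  have -> : i + Z.succ k' * g = (i + k' * g) + g by lia.
  rewrite (IH i xi); last by nia.
  apply: Hp; nia.
Qed.

Lemma per_cong x y g : 0 < g -> per x y g ->
  forall i j, x <= i < y -> x <= j < y -> (g | j - i) -> F i = F j.
Proof.
move=> g0 Hp.
have key : forall i j, x <= i -> j < y -> i <= j -> (g | j - i) -> F i = F j.
  move=> i j xi jy ij [k hk].
  have k0 : 0 <= k by nia.
  have -> : j = i + k * g by lia.
  apply: (per_mult _ _ _ g0 Hp _ k0 i xi); lia.
move=> i j [xi iy] [xj jy] dv.
case: (Z.le_gt_cases i j) => h.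
- by apply: key.
- symmetry; apply: key => //; first lia.
  have -> : i - j = - (j - i) by lia.
  by apply/Z.divide_opp_r.
Qed.

Lemma per_sub x y x' y' p : x <= x' -> y' <= y -> per x y p -> per x' y' p.
Proof. move=> h1 h2 H i h3 h4; apply: H; lia. Qed.

Lemma FW_aux : forall m : nat, forall p q x y, (Z.to_nat (p + q) <= m)%N ->
  0 < p -> 0 < q -> per x y p -> per x y q ->
  p + q - Z.gcd p q <= y - x -> per x y (Z.gcd p q).
Proof.
elim=> [|m IH] p q x y hm p0 q0 Hp Hq hl.
  exfalso; move: hm; rewrite leqn0 => /eqP h; lia.
wlog pq : p q p0 q0 Hp Hq hl hm / p <= q.
  move=> W; case: (Z.le_gt_cases p q) => h; first by apply: W.
  rewrite Z.gcd_comm; apply: W => //; try lia.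
  all: try (rewrite Z.gcd_comm; lia).
  all: try (rewrite Z.add_comm; done).
case: (Z.eq_dec p q) => [<-|pq'].
  by rewrite Z.gcd_diag Z.abs_eq; [|lia].
have gpos : 0 < Z.gcd p q.
  have := Z.gcd_nonneg p q; have := Z.gcd_eq_0_l p q; lia.
have gdp : (Z.gcd p q | p) := Z.gcd_divide_l p q.
have gdq : (Z.gcd p q | q) := Z.gcd_divide_r p q.
have geq : Z.gcd p (q - p) = Z.gcd p q.
  by rewrite Z.gcd_sub_diag_r.
have gle : Z.gcd p q <= q - p.
  apply: Z.divide_pos_le; first lia.
  by apply: Z.divide_sub_r.
have Hqp : per (x + p) y (q - p).
  move=> i h1 h2.
  have e1 : F (i - p) = F (i - p + p) by apply: Hp; lia.
  have e2 : F (i - p) = F (i - p + q) by apply: Hq; lia.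
  rewrite (_ : i - p + p = i) in e1; last lia.
  rewrite (_ : i - p + q = i + (q - p)) in e2; last lia.
  by rewrite -e1 e2.
have IH' : per (x + p) y (Z.gcd p q).
  rewrite -geq; apply: IH; try lia.
  all: try exact: Hqp.
  all: try (by apply: per_sub Hp; lia).
  all: try (apply/leP; move/leP: hm; lia).
have gle2 : Z.gcd p q <= p by apply: Z.divide_pos_le.
move=> i h1 h2.
case: (Z.le_gt_cases (x + p) i) => hi.
  by apply: IH'.
have e1 : F i = F (i + p) by apply: Hp; lia.
rewrite e1.
case: (Z.le_gt_cases (x + p) (i + Z.gcd p q)) => hj.
  apply: (per_cong _ _ _ gpos IH'); try lia.
  have -> : i + Z.gcd p q - (i + p) = - (p - Z.gcd p q) by lia.
  apply/Z.divide_opp_r; apply: Z.divide_sub_r => //; exact: Z.divide_refl.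
have e2 : F (i + Z.gcd p q) = F (i + Z.gcd p q + p) by apply: Hp; lia.
rewrite e2 (_ : i + Z.gcd p q + p = (i + p) + Z.gcd p q); last lia.
apply: IH'; lia.
Qed.

Lemma FW p q x y : 0 < p -> 0 < q -> per x y p -> per x y q ->
  p + q - Z.gcd p q <= y - x -> per x y (Z.gcd p q).
Proof. move=> *; apply: (FW_aux (Z.to_nat (p + q)) p q x y (leqnn _)) => //. Qed.

End FWsec.

Section CoreSec.
Variable F : Z -> bool.
Variables n d e l D : Z.
Hypothesis Hper : forall j, F (j + n) = F j.
Hypothesis Hn : 3 <= n.
Hypothesis Hd1 : 1 <= d.
Hypothesis Hd2 : 2 * d <= n.
Hypothesis He1 : 1 <= e.
Hypothesis He2 : 2 * e <= n.
Hypothesis Hl : 3 * n <= 4 * l + 7.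
Hypothesis Hln : l < n.
Hypothesis HD : 0 <= D < n.
Hypothesis Gd : forall j, 0 <= j < l -> F j = F (j - d).
Hypothesis Ge : forall j, D <= j < D + l -> F j = F (j - e).
Hypothesis Dd : F l <> F (l - d).
Hypothesis De : F (D + l) <> F (D + l - e).
Hypothesis Ld : F (-1) <> F (-1 - d).
Hypothesis Le : F (D - 1) <> F (D - 1 - e).

Lemma perK_pos : forall k, 0 <= k -> forall j, F (j + k * n) = F j.
Proof.
move=> k k0; pattern k; apply: natlike_ind => // [j|k' k'0 IH j].
  by rewrite Z.mul_0_l Z.add_0_r.
rewrite (_ : j + Z.succ k' * n = (j + k' * n) + n); last lia.
by rewrite Hper IH.
Qed.

Lemma perK : forall k j, F (j + k * n) = F j.
Proof.
move=> k j; case: (Z.le_gt_cases 0 k) => h; first exact: perK_pos.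
have H := perK_pos (- k) ltac:(lia) (j + k * n).
rewrite (_ : j + k * n + - k * n = j) in H; [by rewrite H | lia].
Qed.

Lemma perK' a b K : a = b + K * n -> F a = F b.
Proof. move=> ->; exact: perK. Qed.

Lemma gd' a b k : a - b = d -> 0 <= a - k * n < l -> F a = F b.
Proof.
move=> h1 h2.
have H1 : F a = F (a - k * n) by rewrite -(perK k (a - k * n)); f_equal; lia.
have H2 : F b = F (a - k * n - d) by rewrite -(perK k (a - k * n - d)); f_equal; lia.
rewrite H1 H2; apply: Gd; lia.
Qed.

Lemma ge' a b k : a - b = e -> D <= a - k * n < D + l -> F a = F b.
Proof.
move=> h1 h2.
have H1 : F a = F (a - k * n) by rewrite -(perK k (a - k * n)); f_equal; lia.
have H2 : F b = F (a - k * n - e) by rewrite -(perK k (a - k * n - e)); f_equal; lia.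
rewrite H1 H2; apply: Ge; lia.
Qed.

Lemma core : D = 0 /\ d = e.
Proof.
set g := Z.gcd d e.
have gpos : 0 < g.
  have := Z.gcd_nonneg d e; have := Z.gcd_eq_0_l d e; rewrite /g; lia.
have gd : g <= d by apply: Z.divide_pos_le; [lia | apply: Z.gcd_divide_l].
have ge : g <= e by apply: Z.divide_pos_le; [lia | apply: Z.gcd_divide_r].
have gde : (g | e - d) by apply: Z.divide_sub_r; [apply: Z.gcd_divide_r|apply: Z.gcd_divide_l].
have gde' : (g | d - e) by apply: Z.divide_sub_r; [apply: Z.gcd_divide_l|apply: Z.gcd_divide_r].
have geq : d = e -> g = d by move=> E; rewrite /g E Z.gcd_diag Z.abs_eq; lia.
have ld : d <= l by lia.
have le : e <= l by lia.
case: (Z.eq_dec D 0) => HD0.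
  split => //.
  case: (Z.lt_total d e) => [lt|[//|gt]]; exfalso.
  -
    have Pd : per F (-d) l d.
      move=> i h1 h2; symmetry; apply: (gd' _ _ 0); lia.
    have Pe : per F (-d) l e.
      move=> i h1 h2; symmetry; apply: (ge' _ _ 0); lia.
    have Pg := @FW F d e _ _ ltac:(lia) ltac:(lia) Pd Pe ltac:(rewrite -/g; lia).
    rewrite -/g in Pg.
    apply: Ld.
    transitivity (F (-1 - d + e)).
      apply: (per_cong _ _ _ _ gpos Pg); try lia.
      rewrite (_ : -1 - d + e - -1 = e - d); [done|lia].
    apply: (ge' _ _ 0); lia.
  -
    have Pd : per F (-e) l d.
      move=> i h1 h2; symmetry; apply: (gd' _ _ 0); lia.
    have Pe : per F (-e) l e.
      move=> i h1 h2; symmetry; apply: (ge' _ _ 0); lia.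
    have Pg := @FW F d e _ _ ltac:(lia) ltac:(lia) Pd Pe ltac:(rewrite -/g; lia).
    rewrite -/g in Pg.
    apply: Le.
    rewrite HD0.
    transitivity (F (0 - 1 - e + d)).
      apply: (per_cong _ _ _ _ gpos Pg); try lia.
      rewrite (_ : 0 - 1 - e + d - (0 - 1) = d - e); [done|lia].
    apply: (gd' _ _ 0); lia.
exfalso.
have HD1 : 1 <= D by lia.
case: (Z_le_gt_dec (d + e - g) (l - Z.max (-d) (D - e))) => FW0.
  set x0 := Z.max (-d) (D - e) in FW0.
  have Pd : per F x0 l d.
    move=> i h1 h2; symmetry; apply: (gd' _ _ 0); rewrite /x0 in h1; lia.
  have Pe : per F x0 l e.
    move=> i h1 h2; symmetry; apply: (ge' _ _ 0); rewrite /x0 in h1; lia.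
  have Pg := @FW F d e _ _ ltac:(lia) ltac:(lia) Pd Pe ltac:(rewrite -/g; lia).
  rewrite -/g in Pg.
  apply: Dd.
  transitivity (F (l - e)).
    apply: (ge' _ _ 0); rewrite /x0 in FW0; lia.
  apply: (per_cong _ _ _ _ gpos Pg); try (rewrite /x0 in FW0 *; lia).
  rewrite (_ : l - d - (l - e) = e - d); [done|lia].
case: (Z_le_gt_dec (d + e - g) (D + l - n - Z.max (-d) (D - n - e))) => FW1.
  set x1 := Z.max (-d) (D - n - e) in FW1.
  have Pd : per F x1 (D + l - n) d.
    move=> i h1 h2; symmetry; apply: (gd' _ _ 0); rewrite /x1 in h1; lia.
  have Pe : per F x1 (D + l - n) e.
    move=> i h1 h2; symmetry; apply: (ge' _ _ (-1)); rewrite /x1 in h1; lia.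
  have Pg := @FW F d e _ _ ltac:(lia) ltac:(lia) Pd Pe ltac:(rewrite -/g; lia).
  rewrite -/g in Pg.
  apply: De.
  transitivity (F (D + l - n)).
    apply: (perK' _ _ 1); lia.
  transitivity (F (D + l - n - d)).
    apply: (gd' _ _ 0); rewrite /x1 in FW1; lia.
  transitivity (F (D + l - n - e)).
    apply: (per_cong _ _ _ _ gpos Pg); try (rewrite /x1 in FW1 *; lia).
    rewrite (_ : D + l - n - e - (D + l - n - d) = d - e); [done|lia].
  apply: (perK' _ _ (-1)); lia.
have FW0' : ~ (l - Z.max (-d) (D - e) >= d + e - g) by lia.
have FW1' : ~ (D + l - n - Z.max (-d) (D - n - e) >= d + e - g) by lia.
clear FW0 FW1.
clearbody g.
  destruct (Z_le_gt_dec 0 (-e + D + -1)).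
  {
    destruct (Z_le_gt_dec 0 (-n + e + l)).
    {
      destruct (Z_le_gt_dec 0 (-d + e + l + -D)).
      {
        exfalso; apply Dd.
        transitivity (F (e + l)).
        { symmetry; apply (ge' _ _ (0)); lia. }
        transitivity (F (-d + e + l)).
        { apply (gd' _ _ (1)); lia. }
        transitivity (F (-d + l)).
        { apply (ge' _ _ (0)); lia. }
        apply (perK' _ _ (0)); lia.
      }
      {
        exfalso; apply Dd.
        transitivity (F (-e + l)).
        { apply (ge' _ _ (0)); lia. }
        transitivity (F (-d + -e + l)).
        { apply (gd' _ _ (0)); lia. }
        transitivity (F (-d + l)).
        { symmetry; apply (ge' _ _ (-1)); lia. }
        apply (perK' _ _ (0)); lia.
      }
    }
    {
      destruct (Z_le_gt_dec 0 (-n + d + l)).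
      {
        destruct (Z_le_gt_dec 0 (n + -d + -D + -1)).
        {
          exfalso; apply De.
          transitivity (F (d + l + D)).
          { symmetry; apply (gd' _ _ (1)); lia. }
          transitivity (F (d + -e + l + D)).
          { apply (ge' _ _ (1)); lia. }
          transitivity (F (-e + l + D)).
          { apply (gd' _ _ (1)); lia. }
          apply (perK' _ _ (0)); lia.
        }
        {
          destruct (Z_le_gt_dec 0 (-d + D + -1)).
          {
            exfalso; apply Dd.
            transitivity (F (e + l)).
            { symmetry; apply (ge' _ _ (0)); lia. }
            transitivity (F (d + e + l)).
            { symmetry; apply (gd' _ _ (1)); lia. }
            transitivity (F (d + 2*e + l)).
            { symmetry; apply (ge' _ _ (1)); lia. }
            transitivity (F (2*d + 2*e + l)).
            { symmetry; apply (gd' _ _ (2)); lia. }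
            apply (perK' _ _ (2)); lia.
          }
          {
            exfalso; apply Dd.
            transitivity (F (d + l)).
            { symmetry; apply (gd' _ _ (1)); lia. }
            apply (perK' _ _ (1)); lia.
          }
        }
      }
      {
        destruct (Z_le_gt_dec 0 (-n + d + e + D + -1)).
        {
          exfalso; apply Dd.
          transitivity (F (e + l)).
          { symmetry; apply (ge' _ _ (0)); lia. }
          transitivity (F (d + e + l)).
          { symmetry; apply (gd' _ _ (1)); lia. }
          transitivity (F (2*d + e + l)).
          { symmetry; apply (gd' _ _ (1)); lia. }
          apply (perK' _ _ (1)); lia.
        }
        {
          exfalso; apply De.
          transitivity (F (d + l + D)).
          { symmetry; apply (gd' _ _ (1)); lia. }
          transitivity (F (d + e + l + D)).
          { symmetry; apply (ge' _ _ (1)); lia. }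
          transitivity (F (d + 2*e + l + D)).
          { symmetry; apply (ge' _ _ (1)); lia. }
          apply (perK' _ _ (1)); lia.
        }
      }
    }
  }
  {
    destruct (Z_le_gt_dec 0 (-n + d + -e + l + D)).
    {
      exfalso; apply De.
      transitivity (F (d + l + D)).
      { symmetry; apply (gd' _ _ (1)); lia. }
      transitivity (F (d + -e + l + D)).
      { apply (ge' _ _ (1)); lia. }
      transitivity (F (-e + l + D)).
      { apply (gd' _ _ (1)); lia. }
      apply (perK' _ _ (0)); lia.
    }
    {
      destruct (Z_le_gt_dec 0 (-n + d + l)).
      {
        exfalso; apply De.
        transitivity (F (-d + l + D)).
        { apply (gd' _ _ (1)); lia. }
        transitivity (F (-d + -e + l + D)).
        { apply (ge' _ _ (0)); lia. }
        transitivity (F (-e + l + D)).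
        { symmetry; apply (gd' _ _ (0)); lia. }
        apply (perK' _ _ (0)); lia.
      }
      {
        destruct (Z_le_gt_dec 0 (n + -e + -D + -1)).
        {
          exfalso; apply De.
          transitivity (F (d + l + D)).
          { symmetry; apply (gd' _ _ (1)); lia. }
          transitivity (F (d + e + l + D)).
          { symmetry; apply (ge' _ _ (1)); lia. }
          transitivity (F (2*d + e + l + D)).
          { symmetry; apply (gd' _ _ (2)); lia. }
          transitivity (F (2*d + 2*e + l + D)).
          { symmetry; apply (ge' _ _ (2)); lia. }
          apply (perK' _ _ (2)); lia.
        }
        {
          exfalso; apply De.
          transitivity (F (-d + l + D)).
          { apply (gd' _ _ (1)); lia. }
          transitivity (F (l + D)).
          { symmetry; apply (gd' _ _ (1)); lia. }
          transitivity (F (e + l + D)).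
          { symmetry; apply (ge' _ _ (1)); lia. }
          apply (perK' _ _ (1)); lia.
        }
      }
    }
  }
Qed.
End CoreSec.


Lemma perK_gen (F : Z -> bool) (n : Z) : (forall j, F (j + n) = F j) ->
  forall k j, F (j + k * n) = F j.
Proof.
move=> Hper.
have pos : forall k, 0 <= k -> forall j, F (j + k * n) = F j.
  move=> k k0; pattern k; apply: natlike_ind => // [j|k' k'0 IH j].
    by rewrite Z.mul_0_l Z.add_0_r.
  rewrite (_ : j + Z.succ k' * n = (j + k' * n) + n); last lia.
  by rewrite Hper IH.
move=> k j; case: (Z.le_gt_cases 0 k) => h; first exact: pos.
have H := pos (- k) ltac:(lia) (j + k * n).
rewrite (_ : j + k * n + - k * n = j) in H; [by rewrite H | lia].
Qed.

Lemma assemble (Fs Ft : Z -> bool) (n d e v c nk : Z) :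
  (forall z, Fs (z + n) = Fs z) ->
  (forall z, Ft z = Fs (z + nk)) ->
  3 <= n -> 1 <= d -> 2 * d <= n -> 1 <= e -> 2 * e <= n ->
  3 * n <= 4 * (v + c - 1) + 7 -> v + c - 1 < n -> 0 < nk < n ->
  (forall j, 0 <= j < v + c - 1 -> Fs (j + (n - v + d)) = Fs (j + (n - v + d) - d)) ->
  Fs ((v + c - 1) + (n - v + d)) <> Fs ((v + c - 1) + (n - v + d) - d) ->
  Fs (-1 + (n - v + d)) <> Fs (-1 + (n - v + d) - d) ->
  (forall j, 0 <= j < v + c - 1 -> Ft (j + (n - v + e)) = Ft (j + (n - v + e) - e)) ->
  Ft ((v + c - 1) + (n - v + e)) <> Ft ((v + c - 1) + (n - v + e) - e) ->
  Ft (-1 + (n - v + e)) <> Ft (-1 + (n - v + e) - e) ->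
  False.
Proof.
move=> Hper Hrot hn hd1 hd2 he1 he2 hl hln hnk G1 D1 L1 G1' D1' L1'.
set As' := n - v + d in G1 D1 L1.
set At' := n - v + e in G1' D1' L1'.
set l := v + c - 1 in hl hln G1 D1 L1 G1' D1' L1'.
set X := e - d + nk.
have hnZ : 0 < n by lia.
have hDb := Z.mod_pos_bound X n hnZ.
have hX := Z.div_mod X n ltac:(lia).
move: hDb hX; set D := X mod n; set M := X / n => hDb hX.
set FF := fun z => Fs (z + As').
have PK := @perK_gen Fs n Hper.
have KEY : forall z, FF z = Ft (z - D + At').
  move=> z; rewrite Hrot /FF.
  rewrite -(PK (- M) (z - D + At' + nk)).
  congr (Fs _); rewrite /As' /At'; move: hX; rewrite /X; lia.
have := @core FF n d e l D.
case.
- move=> j; rewrite /FF (_ : j + n + As' = j + As' + 1 * n); last lia.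
  exact: PK.
- lia.
- lia.
- lia.
- lia.
- lia.
- exact: hl.
- exact: hDb.
- move=> j hj; rewrite /FF.
  rewrite (_ : j - d + As' = j + As' - d); last lia.
  exact: G1.
- move=> j hj; rewrite !KEY.
  have := G1' (j - D) ltac:(lia).
  by rewrite (_ : j - e - D + At' = j - D + At' - e); last lia.
- rewrite /FF (_ : l - d + As' = l + As' - d); last lia.
  exact: D1.
- rewrite !KEY.
  rewrite (_ : D + l - D + At' = l + At'); last lia.
  rewrite (_ : D + l - e - D + At' = l + At' - e); last lia.
  exact: D1'.
- rewrite /FF (_ : -1 - d + As' = -1 + As' - d); last lia.
  exact: L1.
- rewrite !KEY.
  rewrite (_ : D - 1 - D + At' = -1 + At'); last lia.
  rewrite (_ : D - 1 - e - D + At' = -1 + At' - e); last lia.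
  exact: L1'.
- move=> HD0 hde.
  move: hX; rewrite /X HD0 hde => hX.
  have hM : nk = n * M by lia.
  clearbody M; clear -hM hnk; subst nk; destruct (Z.le_gt_cases 1 M); nia.
Qed.

End ZPart.
Import ZPart.

From mathcomp Require Import zify.


Lemma size_flat_nseq (T : Type) (a : seq T) q : size (flatten (nseq q a)) = q * size a.
Proof. elim: q => [//|q IH] /=; rewrite size_cat IH mulSn. by []. Qed.

Lemma nth_flat_nseq (T : Type) (x0 : T) (a : seq T) q i :
  i < q * size a -> nth x0 (flatten (nseq q a)) i = nth x0 a (i %% size a).
Proof.
elim: q i => [|q IH] i /=; first by rewrite mul0n.
move=> hi; rewrite nth_cat.
case: (ltnP i (size a)) => h.
  by rewrite modn_small.
rewrite IH; last by rewrite mulSn in hi; lia.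
have -> : i = (i - size a) + size a by lia.
by rewrite modnDr addnK.
Qed.

Lemma nth_rotr (T : Type) (x0 : T) (s : seq T) k i :
  k < size s -> i < size s -> nth x0 (rotr k s) i = nth x0 s ((i + (size s - k)) %% size s).
Proof.
move=> hk hi; rewrite /rotr /rot nth_cat size_drop.
case: (ltnP i (size s - (size s - k))) => h.
  rewrite nth_drop modn_small; last lia.
  by rewrite addnC.
rewrite nth_take; last lia.
have -> : i + (size s - k) = (i - (size s - (size s - k))) + size s by lia.
by rewrite modnDr modn_small; last lia.
Qed.

Section SeqFacts.
Variables (n c d v : nat) (s : seq bool).
Hypothesis Hsize : size s = n.
Hypothesis Hcd : c + d <= n.
Hypothesis Hd : 1 <= d.
Hypothesis Hc : 1 <= c.
Hypothesis Htake : take (c + d) s =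
  flatten (nseq ((c + d - 1) %/ d) (take d s)) ++
  rcons (take (c + d - 1 - (c + d - 1) %/ d * d) s)
        (~~ nth false s (c + d - 1 - (c + d - 1) %/ d * d)).
Hypothesis Hv : v = find (fun t => nth false s (n - 1 - t) != nth false s (d.-1 - t %% d)) (iota 0 n).

Let q := (c + d - 1) %/ d.
Let r := c + d - 1 - q * d.

Lemma r_mod : r = (c + d - 1) %% d.
Proof. have := divn_eq (c + d - 1) d; rewrite /r /q; move: ((c + d - 1) %/ d * d) ((c + d - 1) %% d) => X Y; lia. Qed.

Lemma r_lt : r < d.
Proof. by rewrite r_mod ltn_pmod. Qed.

Lemma cd_eq : c + d - 1 = q * d + r.
Proof. have := divn_eq (c + d - 1) d; rewrite /r /q; move: ((c + d - 1) %/ d * d) ((c + d - 1) %% d) => X Y; lia. Qed.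

Lemma S1 i : i < c + d - 1 -> nth false s i = nth false s (i %% d).
Proof.
move=> hi.
have hd : size (take d s) = d by rewrite size_takel // Hsize; lia.
rewrite -(nth_take false (_ : i < c + d)); last lia.
rewrite Htake -/q -/r nth_cat size_flat_nseq hd.
case: (ltnP i (q * d)) => h.
  rewrite nth_flat_nseq hd // nth_take //; exact: ltn_pmod.
rewrite nth_rcons size_take.
have rl := r_lt.
have ce := cd_eq.
have hrs : r < size s by lia.
rewrite hrs.
have -> : i - q * d < r by lia.
rewrite nth_take; last lia.
rewrite [in RHS](_ : i = q * d + (i - q * d)); last lia.
by rewrite modnMDl modn_small //; lia.
Qed.

Lemma S2 : nth false s (c + d - 1) = ~~ nth false s ((c + d - 1) %% d).
Proof.
have hd : size (take d s) = d by rewrite size_takel // Hsize; lia.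
rewrite -(nth_take false (_ : c + d - 1 < c + d)); last lia.
rewrite Htake -/q -/r nth_cat size_flat_nseq hd.
have rl := r_lt.
have ce := cd_eq.
have -> : c + d - 1 < q * d = false by apply/negbTE; lia.
rewrite nth_rcons size_take.
have hrs : r < size s by lia.
rewrite hrs.
have -> : c + d - 1 - q * d < r = false by apply/negbTE; lia.
have -> : c + d - 1 - q * d == r by apply/eqP; lia.
by rewrite -r_mod.
Qed.

Lemma vle : v <= n.
Proof. by rewrite Hv -{3}(size_iota 0 n) find_size. Qed.

Lemma S3 t : t < v -> nth false s (n - 1 - t) = nth false s (d.-1 - t %% d).
Proof.
move=> ht.
have hv := vle.
have := @before_find nat 0 (fun t => nth false s (n - 1 - t) != nth false s (d.-1 - t %% d)) (iota 0 n) t.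
rewrite -Hv => /(_ ht).
rewrite nth_iota; last lia.
by rewrite add0n => /negbFE/eqP.
Qed.

Lemma S4 : v < n -> nth false s (n - 1 - v) != nth false s (d.-1 - v %% d).
Proof.
move=> hv.
have hh : has (fun t => nth false s (n - 1 - t) != nth false s (d.-1 - t %% d)) (iota 0 n).
  by rewrite has_find -Hv size_iota.
by have := nth_find 0 hh; rewrite -Hv nth_iota // add0n.
Qed.

Lemma P1 i : d <= i -> i < c + d - 1 -> nth false s i = nth false s (i - d).
Proof.
move=> h1 h2; rewrite S1 // [in RHS]S1; last lia.
have -> : i = (i - d) + d by lia.
by rewrite modnDr addnK.
Qed.

Lemma P2 : nth false s (c + d - 1) <> nth false s (c - 1).
Proof.
rewrite S2 [in nth false s (c - 1)]S1; last lia.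
have -> : c + d - 1 = (c - 1) + d by lia.
rewrite modnDr; by case: (nth false s _).
Qed.

Lemma P3 t : t + d < v -> nth false s (n - 1 - t) = nth false s (n - 1 - t - d).
Proof.
move=> h; rewrite S3; last lia.
have -> : n - 1 - t - d = n - 1 - (t + d) by lia.
by rewrite S3 // modnDr.
Qed.

Lemma P3b t : t < d -> t < v -> nth false s (n - 1 - t) = nth false s (d - 1 - t).
Proof.
move=> h1 h2; rewrite S3 // modn_small //.
by have -> : d.-1 - t = d - 1 - t by lia.
Qed.

Lemma P4a : v < n -> d <= v -> nth false s (n - 1 - v) <> nth false s (n - 1 - v + d).
Proof.
move=> h1 h2; have := S4 h1.
have -> : n - 1 - v + d = n - 1 - (v - d) by lia.
rewrite [nth false s (n - 1 - (v - d))]S3; last lia.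
have {2}-> : v = (v - d) + d by lia.
by rewrite modnDr => /eqP.
Qed.

Lemma P4b : v < n -> v < d -> nth false s (n - 1 - v) <> nth false s (d - 1 - v).
Proof.
move=> h1 h2; have := S4 h1.
rewrite modn_small //.
have -> : d.-1 - v = d - 1 - v by lia.
by move/eqP.
Qed.

End SeqFacts.

Definition Fs (s : seq bool) (n : nat) (z : Z) : bool :=
  nth false s (Z.to_nat (z mod Z.of_nat n)).

Lemma Fs_per s n z : (0 < n)%N -> Fs s n (z + Z.of_nat n) = Fs s n z.
Proof.
move=> hn; rewrite /Fs.
have -> : (z + Z.of_nat n = z + 1 * Z.of_nat n)%Z by lia.
rewrite Z.mod_add //; lia.
Qed.

Lemma Fs_at s n z (a : Z) : (0 <= z - a * Z.of_nat n < Z.of_nat n)%Z ->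
  Fs s n z = nth false s (Z.to_nat (z - a * Z.of_nat n)).
Proof.
move=> h; rewrite /Fs.
rewrite -(Z.mod_unique_pos z (Z.of_nat n) a (z - a * Z.of_nat n)) //; lia.
Qed.

Section RunZ.
Variables (n c d v : nat) (s : seq bool).
Hypothesis Hsize : size s = n.
Hypothesis Hcd : c + d <= n.
Hypothesis Hd : 1 <= d.
Hypothesis Hc : 1 <= c.
Hypothesis Htake : take (c + d) s =
  flatten (nseq ((c + d - 1) %/ d) (take d s)) ++
  rcons (take (c + d - 1 - (c + d - 1) %/ d * d) s)
        (~~ nth false s (c + d - 1 - (c + d - 1) %/ d * d)).
Hypothesis Hv : v = find (fun t => nth false s (n - 1 - t) != nth false s (d.-1 - t %% d)) (iota 0 n).

Local Notation F := (Fs s n).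
Local Notation nZ := (Z.of_nat n).
Local Notation A := (Z.of_nat n - Z.of_nat v + Z.of_nat d)%Z.
Local Notation L := (Z.of_nat v + Z.of_nat c - 1)%Z.

Lemma RF1 j : (0 <= j < L)%Z -> F (j + A) = F (j + A - Z.of_nat d).
Proof.
move=> hj.
have hv := (@vle n d v s Hv).
case: (Z.lt_ge_cases (j + A) nZ) => h1.
  rewrite (Fs_at _ _ _ 0); last lia.
  rewrite [RHS](Fs_at _ _ _ 0); last lia.
  have := @P3 n c d v s Hsize Hcd Hd Hc Hv (Z.to_nat (nZ - 1 - (j + A))) ltac:(lia).
  have -> : n - 1 - Z.to_nat (nZ - 1 - (j + A)) = Z.to_nat (j + A - 0 * nZ) by lia.
  have -> : Z.to_nat (j + A - 0 * nZ) - d = Z.to_nat (j + A - Z.of_nat d - 0 * nZ) by lia.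
  done.
case: (Z.lt_ge_cases (j + A) (nZ + Z.of_nat d)) => h2.
  rewrite (Fs_at _ _ _ 1); last lia.
  rewrite [RHS](Fs_at _ _ _ 0); last lia.
  have := @P3b n c d v s Hsize Hcd Hd Hc Hv (Z.to_nat (nZ - 1 - (j + A - Z.of_nat d))) ltac:(lia) ltac:(lia).
  have -> : n - 1 - Z.to_nat (nZ - 1 - (j + A - Z.of_nat d)) = Z.to_nat (j + A - Z.of_nat d - 0 * nZ) by lia.
  have -> : d - 1 - Z.to_nat (nZ - 1 - (j + A - Z.of_nat d)) = Z.to_nat (j + A - 1 * nZ) by lia.
  by move=> ->.
rewrite (Fs_at _ _ _ 1); last lia.
rewrite [RHS](Fs_at _ _ _ 1); last lia.
have := @P1 n c d v s Hsize Hcd Hd Hc Htake Hv (Z.to_nat (j + A - 1 * nZ)) ltac:(lia) ltac:(lia).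
have -> : Z.to_nat (j + A - 1 * nZ) - d = Z.to_nat (j + A - Z.of_nat d - 1 * nZ) by lia.
done.
Qed.

Lemma RF2 : F (L + A) <> F (L + A - Z.of_nat d).
Proof.
rewrite (Fs_at _ _ _ 1); last lia.
rewrite [F (L + A - _)](Fs_at _ _ _ 1); last lia.
have := @P2 n c d v s Hsize Hcd Hd Hc Htake Hv.
have -> : c + d - 1 = Z.to_nat (L + A - 1 * nZ) by lia.
have -> : c - 1 = Z.to_nat (L + A - Z.of_nat d - 1 * nZ) by lia.
done.
Qed.

Lemma RF3 : (L < nZ)%Z -> F (-1 + A) <> F (-1 + A - Z.of_nat d).
Proof.
move=> hL.
have hvn : v < n by lia.
rewrite [F (-1 + A - _)](Fs_at _ _ _ 0); last lia.
case: (ltnP v d) => hvd.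
  rewrite (Fs_at _ _ _ 1); last lia.
  have := @P4b n c d v s Hsize Hcd Hd Hc Hv hvn hvd.
  have -> : n - 1 - v = Z.to_nat (-1 + A - Z.of_nat d - 0 * nZ) by lia.
  have -> : d - 1 - v = Z.to_nat (-1 + A - 1 * nZ) by lia.
  by move=> H E; apply: H; rewrite E.
rewrite (Fs_at _ _ _ 0); last lia.
have := @P4a n c d v s Hsize Hcd Hd Hc Hv hvn hvd.
have -> : n - 1 - v + d = Z.to_nat (-1 + A - 0 * nZ) by lia.
have -> : n - 1 - v = Z.to_nat (-1 + A - Z.of_nat d - 0 * nZ) by lia.
by move=> H E; apply: H; rewrite E.
Qed.

Lemma RF_Lt : (L < nZ)%Z.
Proof.
case: (Z.lt_ge_cases L nZ) => // h; exfalso.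
have hn : (0 < n)%N by lia.
apply: RF2.
have E := RF1 (L - nZ) ltac:(lia).
have P1' := Fs_per s n (L + A - nZ) hn.
have P2' := Fs_per s n (L + A - Z.of_nat d - nZ) hn.
rewrite (_ : (L + A - nZ + nZ = L + A)%Z) in P1'; last lia.
rewrite (_ : (L + A - Z.of_nat d - nZ + nZ = L + A - Z.of_nat d)%Z) in P2'; last lia.
rewrite P1' P2'.
rewrite (_ : (L + A - nZ = L - nZ + A)%Z); last lia.
rewrite (_ : (L + A - Z.of_nat d - nZ = L - nZ + A - Z.of_nat d)%Z); last lia.
done.
Qed.

End RunZ.


Lemma Fs_rotr (s : seq bool) n k z : size s = n -> k < n ->
  Fs (rotr k s) n z = Fs s n (z + Z.of_nat (n - k)).
Proof.
move=> hs hk.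
have hn : (0 < Z.of_nat n)%Z by lia.
have hr := Z.mod_pos_bound z (Z.of_nat n) hn.
have hz := Z.div_mod z (Z.of_nat n) ltac:(lia).
rewrite /Fs nth_rotr ?size_rotr ?hs //; last lia.
move: hr hz; set r := (z mod Z.of_nat n)%Z; set q := (z / Z.of_nat n)%Z => hr hz.
case: (ltnP (Z.to_nat r + (n - k)) n) => hm.
  rewrite modn_small //.
  rewrite -(Z.mod_unique_pos (z + Z.of_nat (n - k)) (Z.of_nat n) q (r + Z.of_nat (n - k))); try lia.
  by have -> : Z.to_nat (r + Z.of_nat (n - k)) = Z.to_nat r + (n - k) by lia.
have -> : Z.to_nat r + (n - k) = (Z.to_nat r + (n - k) - n) + n by lia.
rewrite modnDr modn_small; last lia.
rewrite -(Z.mod_unique_pos (z + Z.of_nat (n - k)) (Z.of_nat n) (q + 1) (r + Z.of_nat (n - k) - Z.of_nat n)); try lia.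
by have -> : Z.to_nat (r + Z.of_nat (n - k) - Z.of_nat n) = Z.to_nat r + (n - k) - n by lia.
Qed.

Section Bundle.
Variables (n c d v : nat) (s : seq bool).
Hypothesis Hn : 3 <= n.
Hypothesis Hc : c = (n + 1) %/ 2.
Hypothesis HB : inB3 n c d s.
Hypothesis Hadd : add n d s = v.

Lemma bundle :
  1 <= d /\ 2 * d <= n /\ (Z.of_nat v + Z.of_nat c - 1 < Z.of_nat n)%Z /\
   (forall j, (0 <= j < Z.of_nat v + Z.of_nat c - 1)%Z ->
      Fs s n (j + (Z.of_nat n - Z.of_nat v + Z.of_nat d)) =
      Fs s n (j + (Z.of_nat n - Z.of_nat v + Z.of_nat d) - Z.of_nat d)) /\
   Fs s n ((Z.of_nat v + Z.of_nat c - 1) + (Z.of_nat n - Z.of_nat v + Z.of_nat d)) <>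
   Fs s n ((Z.of_nat v + Z.of_nat c - 1) + (Z.of_nat n - Z.of_nat v + Z.of_nat d) - Z.of_nat d) /\
   Fs s n (-1 + (Z.of_nat n - Z.of_nat v + Z.of_nat d)) <>
   Fs s n (-1 + (Z.of_nat n - Z.of_nat v + Z.of_nat d) - Z.of_nat d) /\
   size s = n.
Proof.
case: HB => [[_ hd1 hd2] [hsz _ _ htk]].
move: hd2; rewrite leq_min => /andP [h1 h2].
have hcd : c + d <= n by lia.
have hc1 : 1 <= c by lia.
have hv : v = find (fun t => nth false s (n - 1 - t) != nth false s (d.-1 - t %% d)) (iota 0 n).
  by rewrite -Hadd.
have hL := @RF_Lt n c d v s hsz hcd hd1 hc1 htk hv.
split => //; split; first lia.
split => //; split.
- exact: @RF1 n c d v s hsz hcd hd1 hc1 htk hv.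
- split; first exact: @RF2 n c d v s hsz hcd hd1 hc1 htk hv.
  split => //; apply: (@RF3 n c d v s) => //.
Qed.
End Bundle.

Lemma auxZ (a b M : Z) : (0 < a < b -> a = b * M -> False)%Z.
Proof. intros [h1 h2] ->. destruct (Z.le_gt_cases 1 M); nia. Qed.

Lemma Fs_perK s n z K : (0 < n)%N -> Fs s n (z + K * Z.of_nat n) = Fs s n z.
Proof. move=> hn; rewrite /Fs Z.mod_add //; lia. Qed.

Theorem lemma9 (n w : nat) (s t : seq bool) :
  3 <= n -> (3 * n) %/ 4 <= w ->
  inRadd n ((n + 1) %/ 2) (w - (n + 1) %/ 2) s ->
  inRadd n ((n + 1) %/ 2) (w - (n + 1) %/ 2) t ->
  s <> t ->
  ~ (exists k, k < n /\ t = Rshift k s).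
Proof.
move=> hn hw [_ [d [Bs As]]] [_ [e [Bt At]]] hst [k [hk ht]].
have [hd1 [hd2 [hL [G1 [D1 [L1 hsz]]]]]] := @bundle n _ d _ s hn (erefl _) Bs As.
have [he1 [he2 [hL' [G1' [D1' [L1' htsz]]]]]] := @bundle n _ e _ t hn (erefl _) Bt At.
case: (posnP k) => [k0|kpos].
  by apply: hst; rewrite ht k0 /Rshift /rotr subn0 rot_size.
have hn0 : (0 < n)%N by lia.
have Ft : forall z, Fs t n z = Fs s n (z + Z.of_nat (n - k)).
  by move=> z; rewrite ht /Rshift Fs_rotr.
have hl : (3 * Z.of_nat n <= 4 * (Z.of_nat (w - (n + 1) %/ 2) + Z.of_nat ((n + 1) %/ 2) - 1) + 7)%Z.
  have h3 := divn_eq (3 * n) 4.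
  have h4 : (3 * n) %% 4 < 4 by rewrite ltn_pmod.
  have h5 := divn_eq (n + 1) 2.
  have h6 : (n + 1) %% 2 < 2 by rewrite ltn_pmod.
  clear -h3 h4 h5 h6 hw hn.
  move: h3 h4 h5 h6 hw.
  move: ((3 * n) %/ 4) ((3 * n) %% 4) ((n + 1) %/ 2) ((n + 1) %% 2) => a b c r.
  lia.
have Hper : forall z, Fs s n (z + Z.of_nat n) = Fs s n z by move=> z; exact: Fs_per.
apply: (@assemble (Fs s n) (Fs t n) (Z.of_nat n) (Z.of_nat d) (Z.of_nat e)
   (Z.of_nat (w - (n + 1) %/ 2)) (Z.of_nat ((n + 1) %/ 2)) (Z.of_nat (n - k))).
all: first [ exact: Hper | exact: Ft | exact: hl | exact: hL | exact: G1 | exact: D1 | exact: L1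
           | exact: G1' | exact: D1' | exact: L1' | (clear -hn hd1 hd2 he1 he2 kpos hk; lia) ].
Qed.
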